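(* Cut elimination preserves weak-regularity, regularity and finite expandability. Therefore, if $\mathcal{D}\in\mathsf{X}$ with $\mathsf{X}\in\{\mathsf{rPLL}_2^\infty,\mathsf{wrPLL}_2^\infty\}$ and $\mathcal{D} \to_{\mathsf{cut}} \mathcal{D}'$, then also $\mathcal{D}' \in \mathsf{X}$.
   Context: Formulas: $A ::= X \mid X^\perp \mid A\otimes A \mid A ⅋ A \mid {!A} \mid {?A} \mid \mathbf{1} \mid \bot \mid \forall X.A \mid \exists X.A$. $\mathsf{PLL}_2^\infty$: possibly infinite, finitely branching coderivations over axiom, cut, $\otimes$, $⅋$, $\mathbf{1}$, $\bot$, weakening $?\mathsf{w}$ (from $\Gamma$ infer $\Gamma,?A$), absorption $?\mathsf{b}$ (from $\Gamma,A,?A$ infer $\Gamma,?A$), $\forall$, $\exists$ (instantiating only $(!,?)$-free formulas), conditional promotion $\mathsf{cp}$ (from left premise $\Gamma,A$ and right premise $?\Gamma,!A$ infer $?\Gamma,!A$). Cut-elimination $\to_{\mathsf{cut}}$ consists of the standard multiplicative, second-order and commutative steps, plus exponential steps: a cut between two $\mathsf{cp}$ rules becomes a $\mathsf{cp}$ whose left premise is the cut of the two left premises and whose right premise is the cut of the two right premises; a cut between $\mathsf{cp}$ (conclusion $?\Gamma,!A$) and $?\mathsf{w}$ on $?A^\perp$ becomes $|\Gamma|$ weakenings; a cut between $\mathsf{cp}$ and $?\mathsf{b}$ (premise $\Delta,A^\perp,?A^\perp$) becomes cuts of the left premise $\Gamma,A$ against $A^\perp$ and of the right premise $?\Gamma,!A$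 against $?A^\perp$, followed by $|\Gamma|$ absorptions. A coderivation is regular if it has finitely many distinct sub-coderivations, weakly regular if it has finitely many distinct sub-coderivations whose conclusions are left premises of $\mathsf{cp}$ rules, finitely expandable if every branch contains finitely many cut and $?\mathsf{b}$ rules, and progressing if every infinite branch contains a $!$-thread (maximal upward sequence of $!$-formula occurrences) infinitely often in the conclusion of a $\mathsf{cp}$. $\mathsf{wrPLL}_2^\infty$ (resp. $\mathsf{rPLL}_2^\infty$) is the set of progressing, finitely expandable, weakly regular (resp. regular) coderivations. *)

(* Defs.v *)
From Stdlib Require Import Bool List Arith Lia Permutation.
Import ListNotations.

(* Formulas, locally nameless: free (named) second-order variables FVar x  *)
(* and their negations NFVar x; bound variables are de Bruijn (BVar/NBVar). *)
Inductive fml : Type :=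
| FVar (x : nat) | NFVar (x : nat)
| BVar (n : nat) | NBVar (n : nat)
| Tens (A B : fml) | Par (A B : fml)
| Oc (A : fml) | Wn (A : fml)
| One | Bot
| All (A : fml) | Ex (A : fml).

Fixpoint dual (A : fml) : fml :=
  match A with
  | FVar x => NFVar x | NFVar x => FVar x
  | BVar n => NBVar n | NBVar n => BVar n
  | Tens A B => Par (dual A) (dual B) | Par A B => Tens (dual A) (dual B)
  | Oc A => Wn (dual A) | Wn A => Oc (dual A)
  | One => Bot | Bot => One
  | All A => Ex (dual A) | Ex A => All (dual A)
  end.

Fixpoint open_rec (k : nat) (B : fml) (A : fml) : fml :=
  match A with
  | FVar x => FVar x | NFVar x => NFVar x
  | BVar n => if Nat.eqb n k then B else BVar n
  | NBVar n => if Nat.eqb n k then dual B else NBVar n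
  | Tens A1 A2 => Tens (open_rec k B A1) (open_rec k B A2)
  | Par A1 A2 => Par (open_rec k B A1) (open_rec k B A2)
  | Oc A1 => Oc (open_rec k B A1) | Wn A1 => Wn (open_rec k B A1)
  | One => One | Bot => Bot
  | All A1 => All (open_rec (S k) B A1) | Ex A1 => Ex (open_rec (S k) B A1)
  end.
Definition fopen (A B : fml) : fml := open_rec 0 B A.

Fixpoint lcb_at (k : nat) (A : fml) : bool :=
  match A with
  | FVar _ | NFVar _ | One | Bot => true
  | BVar n | NBVar n => Nat.ltb n k
  | Tens A1 A2 | Par A1 A2 => lcb_at k A1 && lcb_at k A2
  | Oc A1 | Wn A1 => lcb_at k A1
  | All A1 | Ex A1 => lcb_at (S k) A1
  end.
Definition lc (A : fml) : Prop := lcb_at 0 A = true.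

Fixpoint fv (A : fml) : list nat :=
  match A with
  | FVar x | NFVar x => [x]
  | BVar _ | NBVar _ | One | Bot => []
  | Tens A1 A2 | Par A1 A2 => fv A1 ++ fv A2
  | Oc A1 | Wn A1 | All A1 | Ex A1 => fv A1
  end.

Fixpoint expfree (A : fml) : bool :=
  match A with
  | Oc _ | Wn _ => false
  | Tens A1 A2 | Par A1 A2 => expfree A1 && expfree A2
  | All A1 | Ex A1 => expfree A1
  | _ => true
  end.

Fixpoint fsubst (s : nat -> fml) (A : fml) : fml :=
  match A with
  | FVar x => s x | NFVar x => dual (s x)
  | BVar n => BVar n | NBVar n => NBVar n
  | Tens A1 A2 => Tens (fsubst s A1) (fsubst s A2)
  | Par A1 A2 => Par (fsubst s A1) (fsubst s A2)
  | Oc A1 => Oc (fsubst s A1) | Wn A1 => Wn (fsubst s A1)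
  | One => One | Bot => Bot
  | All A1 => All (fsubst s A1) | Ex A1 => Ex (fsubst s A1)
  end.

Definition upd (s : nat -> fml) (y : nat) (F : fml) : nat -> fml :=
  fun x => if Nat.eqb x y then F else s x.

(* Sequents are lists read up to permutation (multisets).                  *)
(* Rule labels carry the index k of the principal formula in the           *)
(* conclusion and masks m splitting the context between two premises.      *)
Inductive rule : Type :=
| RAx (A : fml)
| RCut (A : fml) (m : list bool) (* premises  G_m, A  and  G_~m, A^perp *)
| RTens (k : nat) (m : list bool)
| RPar (k : nat)
| ROne
| RBot (k : nat)
| RWk (k : nat)
| RAbs (k : nat)                 (* ?b : from G, A, ?A infer G, ?A *)
| RAll (k : nat) (y : nat)       (* eigenvariable y *)
| REx (k : nat) (B : fml)        (* witness B, (!,?)-free *)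
| RCp (k : nat).                 (* conditional promotion: premises [G, A ; ?G, !A] *)

Fixpoint sel {T} (m : list bool) (l : list T) : list T :=
  match m, l with
  | b :: m', x :: l' => if b then x :: sel m' l' else sel m' l'
  | _, _ => []
  end.

(* index in l of the j-th element of sel m l *)
Fixpoint selidx (m : list bool) (j : nat) : nat :=
  match m with
  | [] => 0
  | b :: m' => if b then (match j with 0 => 0 | S j' => S (selidx m' j') end)
               else S (selidx m' j)
  end.

Fixpoint rm {T} (k : nat) (l : list T) : list T :=
  match l, k with
  | [], _ => []
  | _ :: l', 0 => l'
  | x :: l', S k' => x :: rm k' l'
  end.

Definition rmidx (k j : nat) : nat := if Nat.ltb j k then j else S j.

Fixpoint unwn (l : list fml) : option (list fml) :=
  match l with
  | [] => Some []
  | Wn A :: l' => match unwn l' with Some d => Some (A :: d) | None => None end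
  | _ => None
  end.

Definition arity (r : rule) : nat :=
  match r with
  | RAx _ | ROne => 0
  | RCut _ _ | RTens _ _ | RCp _ => 2
  | _ => 1
  end.

Definition princ (r : rule) : option nat :=
  match r with
  | RAx _ | ROne | RCut _ _ => None
  | RTens k _ | RPar k | RBot k | RWk k | RAbs k | RAll k _ | REx k _ | RCp k => Some k
  end.

(* premise patterns (up to permutation) of rule r with conclusion G *)
Definition pats (r : rule) (G : list fml) : option (list (list fml)) :=
  match r with
  | RAx _ => Some []
  | RCut A m =>
      if Nat.eqb (length m) (length G)
      then Some [sel m G ++ [A]; sel (map negb m) G ++ [dual A]] else None
  | RTens k m =>
      match nth_error G k with
      | Some (Tens A B) =>
          if Nat.eqb (length m) (length (rm k G))
          then Some [sel m (rm k G) ++ [A]; sel (map negb m) (rm k G) ++ [B]]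
          else None
      | _ => None end
  | RPar k => match nth_error G k with
              | Some (Par A B) => Some [rm k G ++ [A; B]] | _ => None end
  | ROne => match G with [One] => Some [] | _ => None end
  | RBot k => match nth_error G k with Some Bot => Some [rm k G] | _ => None end
  | RWk k => match nth_error G k with Some (Wn _) => Some [rm k G] | _ => None end
  | RAbs k => match nth_error G k with
              | Some (Wn A) => Some [rm k G ++ [A; Wn A]] | _ => None end
  | RAll k y => match nth_error G k with
                | Some (All A) =>
                    if existsb (fun F => existsb (Nat.eqb y) (fv F)) G then None
                    else Some [rm k G ++ [fopen A (FVar y)]]
                | _ => None end
  | REx k B => match nth_error G k with
               | Some (Ex A) =>
                   if expfree B && lcb_at 0 B then Some [rm k G ++ [fopen A B]]
                   else None
               | _ => None end
  | RCp k => match nth_error G k with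
             | Some (Oc A) =>
                 match unwn (rm k G) with
                 | Some D => Some [D ++ [A]; G] | None => None end
             | _ => None end
  end.

(* immediate ancestry: index j of pattern i is an immediate ancestor of the
   conclusion occurrence returned (None: no descendant, i.e. cut formulas) *)
Definition pa (r : rule) (G : list fml) (i j : nat) : option nat :=
  match r with
  | RAx _ | ROne => None
  | RCut _ m =>
      let mi := if Nat.eqb i 0 then m else map negb m in
      if Nat.ltb j (length (sel mi G)) then Some (selidx mi j) else None
  | RTens k m =>
      let mi := if Nat.eqb i 0 then m else map negb m in
      if Nat.ltb j (length (sel mi (rm k G))) then Some (rmidx k (selidx mi j))
      else Some k
  | RCp k =>
      if Nat.eqb i 0
      then (if Nat.ltb j (length G - 1) then Some (rmidx k j) else Some k)
      else Some j
  | RPar k | RBot k | RWk k | RAbs k | RAll k _ | REx k _ =>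
      if Nat.ltb j (length G - 1) then Some (rmidx k j) else Some k
  end.

Definition rule_ok (r : rule) (G : list fml) (Ps : list (list fml)) : Prop :=
  (match r with RAx A => Permutation G [A; dual A] | _ => True end) /\
  exists ps, pats r G = Some ps /\ Forall2 (@Permutation fml) Ps ps.

(* Coderivations: possibly infinite trees, addressed by positions.         *)
Definition tree := list nat -> option (rule * list fml).

Definition concl_at (D : tree) (p : list nat) : list fml :=
  match D p with Some (_, G) => G | None => [] end.

Definition coderiv (D : tree) : Prop :=
  D [] <> None /\
  (forall p i, D p = None -> D (p ++ [i]) = None) /\
  (forall p r G, D p = Some (r, G) ->
     Forall lc G /\
     (forall i, i < arity r <-> D (p ++ [i]) <> None) /\
     rule_ok r G (map (fun i => concl_at D (p ++ [i])) (seq 0 (arity r)))).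

Definition sub (D : tree) (p : list nat) : tree := fun q => D (p ++ q).

Definition mk (n : rule * list fml) (cs : list tree) : tree :=
  fun p => match p with
           | [] => Some n
           | i :: q => match nth_error cs i with Some c => c q | None => None end
           end.

Definition pref (b : nat -> nat) (n : nat) : list nat := map b (seq 0 n).
Definition infbranch (D : tree) (b : nat -> nat) : Prop :=
  forall n, D (pref b n) <> None.

Definition regular (D : tree) : Prop :=
  exists S : list tree, forall p, D p <> None -> In (sub D p) S.

Definition weakly_regular (D : tree) : Prop :=
  exists S : list tree, forall p k G, D p = Some (RCp k, G) -> In (sub D (p ++ [0])) S.

Definition finitely_expandable (D : tree) : Prop :=
  forall b, infbranch D b ->
    exists N, forall n, N <= n ->
      match D (pref b n) with
      | Some (RCut _ _, _) | Some (RAbs _, _) => False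
      | _ => True
      end.

(* occurrences: a witness that the premise i is the permutation s of pattern i *)
Definition perm_witness (P pat : list fml) (s : nat -> nat) : Prop :=
  length P = length pat /\
  (forall j, j < length P -> s j < length pat /\ nth j P One = nth (s j) pat One) /\
  (forall j j', j < length P -> j' < length P -> s j = s j' -> j = j').

Definition local_ok (D : tree) (p : list nat) (w : nat -> nat -> nat) : Prop :=
  match D p with
  | Some (r, G) =>
      forall i ps, pats r G = Some ps -> i < arity r ->
        exists pat, nth_error ps i = Some pat /\
                    perm_witness (concl_at D (p ++ [i])) pat (w i)
  | None => True
  end.

Definition anc (D : tree) (W : list nat -> nat -> nat -> nat)
  (p : list nat) (i j : nat) : option nat :=
  match D p with Some (r, G) => pa r G i (W p i j) | None => None end.

Definition is_oc (F : fml) : Prop := match F with Oc _ => True | _ => False end.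

(* every infinite branch has a !-thread that is infinitely often the principal
   formula in the conclusion of a cp rule *)
Definition progressing (D : tree) : Prop :=
  exists W : list nat -> nat -> nat -> nat,
    (forall p, local_ok D p (W p)) /\
    forall b, infbranch D b ->
      exists n0 (f : nat -> nat),
        (forall n, n0 <= n ->
           f n < length (concl_at D (pref b n)) /\
           is_oc (nth (f n) (concl_at D (pref b n)) One) /\
           anc D W (pref b n) (b n) (f (S n)) = Some (f n)) /\
        (forall N, exists n, N <= n /\ exists G, D (pref b n) = Some (RCp (f n), G)).

Definition wrPLL (D : tree) : Prop :=
  coderiv D /\ progressing D /\ finitely_expandable D /\ weakly_regular D.
Definition rPLL (D : tree) : Prop :=
  coderiv D /\ progressing D /\ finitely_expandable D /\ regular D.

(* E is a cut on A between X (containing A) and Y (containing A^perp) *)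
Definition is_cut (E : tree) (A : fml) (X Y : tree) : Prop :=
  exists m G, E = mk (RCut A m, G) [X; Y] \/ E = mk (RCut (dual A) m, G) [Y; X].

Fixpoint wk_chain (n : nat) (E Z : tree) : Prop :=
  match n with
  | 0 => E = Z
  | S n' => exists k G E1, E = mk (RWk k, G) [E1] /\ wk_chain n' E1 Z
  end.

Fixpoint abs_chain (n : nat) (E Z : tree) : Prop :=
  match n with
  | 0 => E = Z
  | S n' => exists k G E1, E = mk (RAbs k, G) [E1] /\ abs_chain n' E1 Z
  end.

(* substitution of free variables along a coderivation; above an ∀ rule with
   eigenvariable y the variable y is no longer substituted (it is rebound) *)
Definition rule_inst (s : nat -> fml) (r r' : rule) (s' : nat -> fml) : Prop :=
  match r with
  | RAx A => r' = RAx (fsubst s A) /\ s' = s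
  | RCut A m => r' = RCut (fsubst s A) m /\ s' = s
  | REx k B => r' = REx k (fsubst s B) /\ s' = s
  | RAll k y => r' = r /\ s' = upd s y (FVar y)
  | _ => r' = r /\ s' = s
  end.

Definition tsubst_rel (D E : tree) (s0 : nat -> fml) : Prop :=
  exists rho : list nat -> nat -> fml, rho [] = s0 /\
    forall p, match D p, E p with
              | None, None => True
              | Some (r, G), Some (r', G') =>
                  G' = map (fsubst (rho p)) G /\
                  forall i, rule_inst (rho p) r r' (rho (p ++ [i]))
              | _, _ => False
              end.

Definition nonprincipal (r : rule) (G : list fml) (A : fml) : Prop :=
  match princ r with
  | Some k => exists j, j <> k /\ nth_error G j = Some A
  | None => True
  end.

(* commutative steps: the rule r' below replaces r, s renames the eigenvariable *)
Definition comm_kind (r r' : rule) (s : nat -> fml) : Prop :=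
  match r with
  | RCut A _ => (exists m', r' = RCut A m') /\ s = FVar
  | RTens _ _ => (exists k' m', r' = RTens k' m') /\ s = FVar
  | RPar _ => (exists k', r' = RPar k') /\ s = FVar
  | RBot _ => (exists k', r' = RBot k') /\ s = FVar
  | RWk _ => (exists k', r' = RWk k') /\ s = FVar
  | RAbs _ => (exists k', r' = RAbs k') /\ s = FVar
  | REx _ B => (exists k', r' = REx k' B) /\ s = FVar
  | RAll _ y => exists k' y', r' = RAll k' y' /\ s = upd FVar y (FVar y')
  | _ => False
  end.

Definition root_red (D D' : tree) : Prop :=
  (exists A X Y A0 G0, is_cut D A X Y /\ X = mk (RAx A0, G0) [] /\ D' = Y)
  \/ (exists A B X Y X1 X2 Y1 k mx GX k' GY E,
        is_cut D (Tens A B) X Y /\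
        X = mk (RTens k mx, GX) [X1; X2] /\ nth_error GX k = Some (Tens A B) /\
        Y = mk (RPar k', GY) [Y1] /\ nth_error GY k' = Some (Par (dual A) (dual B)) /\
        is_cut D' B X2 E /\ is_cut E A X1 Y1)
  \/ (exists X Y k GY Y1,
        is_cut D One X Y /\ X = mk (ROne, [One]) [] /\
        Y = mk (RBot k, GY) [Y1] /\ D' = Y1)
  \/ (exists A B X Y X1 Y1 k y GX k' GY X1',
        is_cut D (All A) X Y /\
        X = mk (RAll k y, GX) [X1] /\ nth_error GX k = Some (All A) /\
        Y = mk (REx k' B, GY) [Y1] /\ nth_error GY k' = Some (Ex (dual A)) /\
        tsubst_rel X1 X1' (upd FVar y B) /\ is_cut D' (fopen A B) X1' Y1)
  \/ (exists A X Y XL XR YL YR k GX k' GY k'' G' E1 E2,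
        is_cut D (Oc A) X Y /\
        X = mk (RCp k, GX) [XL; XR] /\ nth_error GX k = Some (Oc A) /\
        Y = mk (RCp k', GY) [YL; YR] /\
        D' = mk (RCp k'', G') [E1; E2] /\ is_cut E1 A XL YL /\ is_cut E2 (Oc A) XR YR)
  \/ (exists A X Y XL XR k GX k' GY Y1,
        is_cut D (Oc A) X Y /\
        X = mk (RCp k, GX) [XL; XR] /\ nth_error GX k = Some (Oc A) /\
        Y = mk (RWk k', GY) [Y1] /\ nth_error GY k' = Some (Wn (dual A)) /\
        wk_chain (length GX - 1) D' Y1)
  \/ (exists A X Y XL XR k GX k' GY Y1 E,
        is_cut D (Oc A) X Y /\
        X = mk (RCp k, GX) [XL; XR] /\ nth_error GX k = Some (Oc A) /\
        Y = mk (RAbs k', GY) [Y1] /\ nth_error GY k' = Some (Wn (dual A)) /\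
        abs_chain (length GX - 1) D' E /\
        ((exists E0, is_cut E0 (Oc A) XR Y1 /\ is_cut E A XL E0) \/
         (exists E0, is_cut E0 A XL Y1 /\ is_cut E (Oc A) XR E0)))
  \/ (exists A X Y r GX Xs r' G' Es i Xi Xi' Ei s,
        is_cut D A X Y /\ X = mk (r, GX) Xs /\ nonprincipal r GX A /\
        comm_kind r r' s /\ D' = mk (r', G') Es /\
        length Es = length Xs /\
        nth_error Xs i = Some Xi /\ nth_error Es i = Some Ei /\
        (forall j, j <> i -> nth_error Es j = nth_error Xs j) /\
        tsubst_rel Xi Xi' s /\ is_cut Ei A Xi' Y).

Definition cut_step (D D' : tree) : Prop :=
  coderiv D /\ coderiv D' /\
  exists p, D p <> None /\
    (forall q, (forall r, q <> p ++ r) -> D' q = D q) /\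
    Permutation (concl_at D p) (concl_at D' p) /\
    root_red (sub D p) (sub D' p).

(* Main.v *)
Require Import Defs.
From Stdlib Require Import Bool List Arith Lia Permutation.
From Stdlib Require Import Classical FunctionalExtensionality IndefiniteDescription.
Import ListNotations.

Lemma dual_invol A : dual (dual A) = A.
Proof. induction A; simpl; congruence. Qed.

Lemma fsubst_dual s A : fsubst s (dual A) = dual (fsubst s A).
Proof. induction A; simpl; try congruence. rewrite dual_invol; auto. Qed.

Lemma fsubst_id A : fsubst FVar A = A.
Proof. induction A; simpl; congruence. Qed.

Lemma lcb_dual n A : lcb_at n (dual A) = lcb_at n A.
Proof. revert n; induction A; intros; simpl; auto; rewrite ?IHA1, ?IHA2; auto. Qed.

Lemma lcb_mono A d k : lcb_at d A = true -> d <= k -> lcb_at k A = true.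
Proof.
  revert d k; induction A; intros d k H Hk; simpl in *; auto;
  try (apply Nat.ltb_lt in H; apply Nat.ltb_lt; lia);
  try (apply andb_true_iff in H as [H1 H2]; apply andb_true_iff; split; eauto);
  eauto; apply (IHA (S d)); auto; lia.
Qed.

Lemma open_lc A d k C : lcb_at d A = true -> d <= k -> open_rec k C A = A.
Proof.
  revert d k; induction A; intros d k H Hk; simpl in *; auto;
  try (apply Nat.ltb_lt in H; destruct (Nat.eqb_spec n k); [lia|auto]);
  try (apply andb_true_iff in H as [H1 H2]; erewrite IHA1, IHA2; eauto);
  try (erewrite IHA; eauto; lia).
Qed.

Definition slc (s : nat -> fml) := forall x, lcb_at 0 (s x) = true.

Lemma fsubst_open s A k B : slc s ->
  fsubst s (open_rec k B A) = open_rec k (fsubst s B) (fsubst s A).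
Proof.
  intro Hs; revert k; induction A; intros k; simpl; auto;
  try (rewrite IHA1, IHA2; auto); try (rewrite IHA; auto).
  - rewrite (open_lc _ 0); auto; lia.
  - rewrite (open_lc _ 0); auto. rewrite lcb_dual; auto. lia.
  - destruct (Nat.eqb n k); auto.
  - destruct (Nat.eqb n k); simpl; auto. apply fsubst_dual.
Qed.

Lemma fsubst_upd_notin s y F A : ~ In y (fv A) -> fsubst (upd s y F) A = fsubst s A.
Proof.
  induction A; simpl; intros H; auto;
  try (rewrite IHA1, IHA2; auto; intro; apply H; apply in_or_app; auto);
  try (rewrite IHA; auto);
  unfold upd; destruct (Nat.eqb_spec x y); subst; auto; exfalso; auto.
Qed.

Lemma upd_same s y : s y = FVar y -> upd s y (FVar y) = s.
Proof. intro H; apply functional_extensionality; intro x; unfold upd;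
  destruct (Nat.eqb_spec x y); subst; auto. Qed.

Definition good (y : nat) (C : fml) (s : nat -> fml) := s = FVar \/ s = upd FVar y C.

Lemma good_upd y C s z : good y C s -> good y C (upd s z (FVar z)).
Proof.
  intros [->| ->].
  - left; apply upd_same; auto.
  - destruct (Nat.eqb_spec z y).
    + subst; left; apply functional_extensionality; intro x; unfold upd;
      destruct (Nat.eqb_spec x y); subst; auto.
    + right; apply upd_same; unfold upd; destruct (Nat.eqb_spec z y); auto; lia.
Qed.

Lemma good_slc y C s : lcb_at 0 C = true -> good y C s -> slc s.
Proof. intros HC [->| ->]; intro x; unfold upd; simpl; auto.
  destruct (Nat.eqb x y); auto. Qed.

Lemma sel_map {T U} (f : T -> U) m l : sel m (map f l) = map f (sel m l).
Proof. revert l; induction m as [|b m IH]; intros [|x l]; simpl; auto.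
  destruct b; simpl; rewrite IH; auto. Qed.

Lemma rm_map {T U} (f : T -> U) k l : rm k (map f l) = map f (rm k l).
Proof. revert k; induction l as [|x l IH]; intros [|k]; simpl; auto. rewrite IH; auto. Qed.

Lemma rm_in {T} k (l : list T) x : In x (rm k l) -> In x l.
Proof. revert k; induction l as [|y l IH]; intros [|k]; simpl; auto.
  intros [H|H]; auto. right; eapply IH; eauto. Qed.

Lemma unwn_map s l d : unwn l = Some d -> unwn (map (fsubst s) l) = Some (map (fsubst s) d).
Proof.
  revert d; induction l as [|x l IH]; intros d H; simpl in *.
  - inversion H; auto.
  - destruct x; try discriminate. destruct (unwn l) eqn:E; try discriminate.
    inversion H; subst. simpl. rewrite (IH l0); auto.
Qed.

Definition inst (s : nat -> fml) (r : rule) : rule :=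
  match r with
  | RAx A => RAx (fsubst s A)
  | RCut A m => RCut (fsubst s A) m
  | REx k B => REx k (fsubst s B)
  | _ => r
  end.

Definition stp (s : nat -> fml) (o : option (rule * list fml)) : nat -> fml :=
  match o with Some (RAll _ y, _) => upd s y (FVar y) | _ => s end.

Lemma arity_inst s r : arity (inst s r) = arity r.
Proof. destruct r; auto. Qed.

Lemma pa_inst s r G i j : pa (inst s r) (map (fsubst s) G) i j = pa r G i j.
Proof. destruct r; simpl; rewrite ?rm_map, ?sel_map, ?length_map; auto. Qed.

Lemma existsb_false_notin y F : existsb (Nat.eqb y) (fv F) = false -> ~ In y (fv F).
Proof. intros H Hin. assert (existsb (Nat.eqb y) (fv F) = true).
  { apply existsb_exists. exists y; split; auto. apply Nat.eqb_refl. } congruence. Qed.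

Lemma pats_subst s r G ps ps' : slc s ->
  pats r G = Some ps ->
  pats (inst s r) (map (fsubst s) G) = Some ps' ->
  ps' = map (map (fsubst (stp s (Some (r, G))))) ps.
Proof.
  intros Hs H1 H2.
  destruct r; simpl in *.
  - inversion H1; inversion H2; auto.
  - rewrite length_map in H2. destruct (Nat.eqb (length m) (length G)); try discriminate.
    inversion H1; inversion H2; subst; simpl. rewrite !map_app, !sel_map; simpl.
    rewrite fsubst_dual; auto.
  - destruct (nth_error G k) as [F|] eqn:E; try discriminate.
    rewrite (map_nth_error _ _ _ E) in H2.
    destruct F; try discriminate; simpl in *.
    rewrite rm_map, length_map in H2.
    destruct (Nat.eqb (length m) (length (rm k G))); try discriminate.
    inversion H1; inversion H2; subst; simpl. rewrite !map_app, !sel_map; auto.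
  - destruct (nth_error G k) as [F|] eqn:E; try discriminate.
    rewrite (map_nth_error _ _ _ E) in H2.
    destruct F; try discriminate; simpl in *.
    rewrite rm_map in H2. inversion H1; inversion H2; subst; simpl. rewrite !map_app; auto.
  - destruct G as [|F [|]]; simpl in *; try discriminate; destruct F; simpl in *; try discriminate;
    inversion H1; inversion H2; auto.
  - destruct (nth_error G k) as [F|] eqn:E; try discriminate.
    rewrite (map_nth_error _ _ _ E) in H2.
    destruct F; try discriminate; simpl in *.
    rewrite rm_map in H2. inversion H1; inversion H2; subst; simpl. auto.
  - destruct (nth_error G k) as [F|] eqn:E; try discriminate.
    rewrite (map_nth_error _ _ _ E) in H2.
    destruct F; try discriminate; simpl in *.
    rewrite rm_map in H2. inversion H1; inversion H2; subst; simpl. auto.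
  - destruct (nth_error G k) as [F|] eqn:E; try discriminate.
    rewrite (map_nth_error _ _ _ E) in H2.
    destruct F; try discriminate; simpl in *.
    rewrite rm_map in H2. inversion H1; inversion H2; subst; simpl. rewrite !map_app; auto.
  - destruct (nth_error G k) as [F|] eqn:E; try discriminate.
    rewrite (map_nth_error _ _ _ E) in H2.
    destruct F; try discriminate; simpl in *.
    destruct (existsb (fun F => existsb (Nat.eqb y) (fv F)) G) eqn:Ey; try discriminate.
    destruct (existsb (fun F => existsb (Nat.eqb y) (fv F)) (map (fsubst s) G)); try discriminate.
    rewrite rm_map in H2. inversion H1; inversion H2; subst; simpl. clear H1 H2.
    assert (Hn : forall Z, In Z G -> ~ In y (fv Z)).
    { intros Z HZ. apply existsb_false_notin.
      destruct (existsb (Nat.eqb y) (fv Z)) eqn:EF; auto.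
      assert (existsb (fun F => existsb (Nat.eqb y) (fv F)) G = true) by
        (apply existsb_exists; eauto). congruence. }
    f_equal. rewrite map_app. f_equal.
    + apply map_ext_in. intros Z HZ. rewrite fsubst_upd_notin; auto.
      apply Hn. eapply rm_in; eauto.
    + simpl. unfold fopen. rewrite fsubst_open.
      * simpl. unfold upd at 1. rewrite Nat.eqb_refl. rewrite fsubst_upd_notin; auto.
        apply (Hn (All F)). eapply nth_error_In; eauto.
      * intro x; unfold upd; destruct (Nat.eqb x y); simpl; auto.
  - destruct (nth_error G k) as [F|] eqn:E; try discriminate.
    rewrite (map_nth_error _ _ _ E) in H2.
    destruct F; try discriminate; simpl in *.
    destruct (expfree B && lcb_at 0 B); try discriminate.
    destruct (expfree (fsubst s B) && lcb_at 0 (fsubst s B)); try discriminate.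
    rewrite rm_map in H2. inversion H1; inversion H2; subst; simpl. rewrite !map_app.
    simpl. unfold fopen. rewrite fsubst_open; auto.
  - destruct (nth_error G k) as [F|] eqn:E; try discriminate.
    rewrite (map_nth_error _ _ _ E) in H2.
    destruct F; try discriminate; simpl in *.
    destruct (unwn (rm k G)) as [d|] eqn:Eu; try discriminate.
    rewrite rm_map, (unwn_map s _ _ Eu) in H2.
    inversion H1; inversion H2; subst; simpl. rewrite !map_app; auto.
Qed.

Lemma perm_witness_ex P pat : Permutation P pat -> exists w, perm_witness P pat w.
Proof.
  unfold perm_witness. induction 1.
  - exists (fun j => j); simpl; split; [auto|split]; intros; simpl in *; lia.
  - destruct IHPermutation as [w [Hl [Hw Hi]]].
    exists (fun j => match j with 0 => 0 | S j => S (w j) end). simpl; split; [lia|split].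
    + intros [|j] Hj; simpl; [split; auto; lia|]. destruct (Hw j) as [A B]; [lia|]. split; auto; lia.
    + intros [|j] [|j'] Hj Hj' E; auto; try discriminate. f_equal. apply Hi; try lia; congruence.
  - exists (fun j => match j with 0 => 1 | 1 => 0 | j => j end). simpl; split; [lia|split].
    + intros [|[|j]] Hj; simpl; split; auto; lia.
    + intros [|[|j]] [|[|j']] Hj Hj' E; auto; try discriminate; lia.
  - destruct IHPermutation1 as [w1 [Hl1 [Hw1 Hi1]]].
    destruct IHPermutation2 as [w2 [Hl2 [Hw2 Hi2]]].
    exists (fun j => w2 (w1 j)). split; [lia|split].
    + intros j Hj. destruct (Hw1 j Hj) as [A B]. destruct (Hw2 (w1 j)) as [C D]; [lia|].
      split; auto; congruence.
    + intros j j' Hj Hj' E. apply Hi1; auto. apply Hi2; auto.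
      * destruct (Hw1 j Hj); lia.
      * destruct (Hw1 j' Hj'); lia.
Qed.

Lemma nth_map_One s l j : nth j (map (fsubst s) l) One = fsubst s (nth j l One).
Proof.
  change One with (fsubst s One) at 1. apply map_nth.
Qed.

Lemma perm_witness_map s P pat w : perm_witness P pat w ->
  perm_witness (map (fsubst s) P) (map (fsubst s) pat) w.
Proof.
  unfold perm_witness; rewrite !length_map. intros [Hl [Hw Hi]]; split; auto; split; auto.
  intros j Hj; destruct (Hw j Hj) as [A B]; split; auto.
  rewrite !nth_map_One; congruence.
Qed.

Lemma sub_sub (T : tree) a b : sub (sub T a) b = sub T (a ++ b).
Proof. apply functional_extensionality; intro x; unfold sub; rewrite app_assoc; auto. Qed.

Lemma sub_nil (T : tree) : sub T [] = T.
Proof. reflexivity. Qed.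

Lemma mk_sub (T : tree) n cs i c : T = mk n cs -> nth_error cs i = Some c -> c = sub T [i].
Proof. intros -> H; apply functional_extensionality; intro x; unfold sub, mk; simpl.
  rewrite H; auto. Qed.

Lemma is_cut_sub U A X Y : is_cut U A X Y ->
  (X = sub U [0] /\ Y = sub U [1]) \/ (X = sub U [1] /\ Y = sub U [0]).
Proof.
  intros [m [G [H|H]]]; [left|right]; split; eapply mk_sub; eauto; reflexivity.
Qed.

Definition pclosed (T : tree) := forall q i, T q = None -> T (q ++ [i]) = None.

Lemma pclosed_sub T a : pclosed T -> pclosed (sub T a).
Proof. unfold pclosed, sub; intros H q i E. rewrite app_assoc; apply H; auto. Qed.

Lemma pclosed_app T q r : pclosed T -> T q = None -> T (q ++ r) = None.
Proof.
  intros H E; induction r as [|i r IH] using rev_ind.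
  - rewrite app_nil_r; auto.
  - rewrite app_assoc; apply H; auto.
Qed.

Lemma pclosed_pre T q r : pclosed T -> T (q ++ r) <> None -> T q <> None.
Proof. intros H E E'; apply E; apply pclosed_app; auto. Qed.

Fixpoint rhoF (T : tree) (s : nat -> fml) (q : list nat) : nat -> fml :=
  match q with
  | [] => s
  | i :: q' => rhoF (sub T [i]) (stp s (T [])) q'
  end.

Definition F (T : tree) (s : nat -> fml) : tree := fun q =>
  match T q with
  | Some (r, G) => Some (inst (rhoF T s q) r, map (fsubst (rhoF T s q)) G)
  | None => None
  end.

Lemma rhoF_app T s q q' : rhoF T s (q ++ q') = rhoF (sub T q) (rhoF T s q) q'.
Proof.
  revert T s; induction q as [|i q IH]; intros T s; simpl; auto.
Qed.

Lemma rhoF_snoc T s q i : rhoF T s (q ++ [i]) = stp (rhoF T s q) (T q).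
Proof. rewrite rhoF_app; simpl. unfold sub; rewrite app_nil_r; auto. Qed.

Lemma F_sub T s q : sub (F T s) q = F (sub T q) (rhoF T s q).
Proof. apply functional_extensionality; intro r; unfold F, sub at 1.
  rewrite rhoF_app. reflexivity. Qed.

Lemma F_none T s q : F T s q = None <-> T q = None.
Proof. unfold F; destruct (T q) as [[r G]|]; split; congruence. Qed.

Lemma rhoF_good y C T s q : good y C s -> good y C (rhoF T s q).
Proof.
  revert T s; induction q as [|i q IH]; intros T s Hs; simpl; auto.
  apply IH. unfold stp. destruct (T []) as [[[] G]|]; auto. apply good_upd; auto.
Qed.

Lemma rhoF_FVar T q : rhoF T FVar q = FVar.
Proof.
  revert T; induction q as [|i q IH]; intros T; simpl; auto.
  unfold stp. destruct (T []) as [[[] G]|]; auto. rewrite upd_same; auto.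
Qed.

Lemma inst_id r : inst FVar r = r.
Proof. destruct r; simpl; rewrite ?fsubst_id; auto. Qed.

Lemma F_FVar T : F T FVar = T.
Proof.
  apply functional_extensionality; intro q; unfold F. rewrite rhoF_FVar.
  destruct (T q) as [[r G]|]; auto. rewrite inst_id.
  rewrite (map_ext _ (fun x => x)), map_id; auto. apply fsubst_id.
Qed.

Lemma tsubst_F T E s : pclosed T -> tsubst_rel T E s -> E = F T s.
Proof.
  intros Hpc [rho [H0 H]].
  assert (Hr : forall q, T q <> None -> rho q = rhoF T s q).
  { induction q as [|i q IH] using rev_ind; intros Hq; simpl; auto.
    assert (Tq : T q <> None) by (intro E0; apply Hq; apply Hpc; auto).
    rewrite rhoF_snoc, <- IH; auto.
    specialize (H q). destruct (T q) as [[r G]|]; [|congruence].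
    destruct (E q) as [[r' G']|]; [|contradiction].
    destruct H as [_ H]. specialize (H i).
    destruct r; simpl in H; destruct H; auto. }
  apply functional_extensionality; intro q. unfold F.
  specialize (Hr q). specialize (H q).
  destruct (T q) as [[r G]|]; destruct (E q) as [[r' G']|]; try contradiction; auto.
  rewrite <- Hr by congruence. destruct H as [-> H]. specialize (H 0).
  destruct r; simpl in H; destruct H; subst; auto.
Qed.

Record leaf := Leaf { lpos : list nat; lq : list nat; ly : nat; lC : fml }.

Definition sl (l : leaf) := upd FVar (ly l) (lC l).

Definition Fr (U T : tree) : Prop := exists (H : list (list nat)) (L : list leaf),
  (forall r, T r <> None -> In r H \/ exists l r', In l L /\ r = lpos l ++ r') /\
  (forall l, In l L -> lcb_at 0 (lC l) = true /\ sub T (lpos l) = F (sub U (lq l)) (sl l)).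

Lemma fr_leaf U T q y C : lcb_at 0 C = true -> T = F (sub U q) (upd FVar y C) -> Fr U T.
Proof.
  intros HC ->. exists [], [Leaf [] q y C]. split.
  - intros r _. right. exists (Leaf [] q y C), r. simpl; auto.
  - intros l [<-|[]]; simpl; auto.
Qed.

Lemma upd_FVar0 : upd FVar 0 (FVar 0) = FVar.
Proof. apply upd_same; auto. Qed.

Lemma fr_F0 U T q : T = F (sub U q) FVar -> Fr U T.
Proof. intros ->. apply (fr_leaf U _ q 0 (FVar 0)); auto. rewrite upd_FVar0; auto. Qed.

Lemma fr_id U T q : T = sub U q -> Fr U T.
Proof. intros ->. apply (fr_F0 U _ q). rewrite F_FVar; auto. Qed.

Definition shiftl (k : nat) (l : leaf) := Leaf (k :: lpos l) (lq l) (ly l) (lC l).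

Lemma fr_mk_aux U cs : forall k, (forall i c, nth_error cs i = Some c -> Fr U c) ->
  exists H L,
   (forall i c r, nth_error cs i = Some c -> c r <> None ->
      In ((k+i) :: r) H \/ exists l r', In l L /\ (k+i) :: r = lpos l ++ r') /\
   (forall l, In l L -> lcb_at 0 (lC l) = true /\ exists i c r0, lpos l = (k+i) :: r0 /\
      nth_error cs i = Some c /\ sub c r0 = F (sub U (lq l)) (sl l)).
Proof.
  induction cs as [|c cs IH]; intros k Hcs.
  - exists [], []; split; [intros [|i]; simpl; discriminate|intros _ []].
  - destruct (Hcs 0 c eq_refl) as [H1 [L1 [A1 B1]]].
    destruct (IH (S k)) as [H2 [L2 [A2 B2]]].
    { intros i c' E; apply (Hcs (S i)); auto. }
    exists (map (cons k) H1 ++ H2), (map (shiftl k) L1 ++ L2). split.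
    + intros [|i] c' r E Hr; simpl in E.
      * inversion E; subst. rewrite Nat.add_0_r. destruct (A1 r Hr) as [Hin|[l [r' [Hl ->]]]].
        -- left; apply in_or_app; left; apply in_map; auto.
        -- right. exists (shiftl k l), r'. split; auto. apply in_or_app; left; apply in_map; auto.
      * destruct (A2 i c' r E Hr) as [Hin|[l [r' [Hl E']]]].
        -- left; apply in_or_app; right. replace (k + S i) with (S k + i) by lia; auto.
        -- right. exists l, r'. split; [apply in_or_app; right; auto|].
           replace (k + S i) with (S k + i) by lia; auto.
    + intros l Hl. apply in_app_or in Hl as [Hl|Hl].
      * apply in_map_iff in Hl as [l0 [<- Hl0]]. destruct (B1 l0 Hl0) as [HC E].
        split; auto. exists 0, c, (lpos l0). simpl. rewrite Nat.add_0_r; auto.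
      * destruct (B2 l Hl) as [HC [i [c' [r0 [E1 [E2 E3]]]]]]. split; auto.
        exists (S i), c', r0. rewrite E1. replace (k + S i) with (S k + i) by lia; auto.
Qed.

Lemma fr_mk U n cs : (forall i c, nth_error cs i = Some c -> Fr U c) -> Fr U (mk n cs).
Proof.
  intros Hcs. destruct (fr_mk_aux U cs 0 Hcs) as [H [L [A B]]].
  exists ([] :: H), L. split.
  - intros [|i r] Hr; [left; simpl; auto|].
    simpl in Hr. destruct (nth_error cs i) as [c|] eqn:E; [|congruence].
    destruct (A i c r E Hr) as [Hin|Hl]; [left; simpl; auto|right; auto].
  - intros l Hl. destruct (B l Hl) as [HC [i [c [r0 [E1 [E2 E3]]]]]]. split; auto.
    rewrite E1. simpl. rewrite <- E3. apply functional_extensionality; intro x.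
    unfold sub, mk; simpl. rewrite E2; auto.
Qed.

Ltac frmk := apply fr_mk; intros [|[|[|?]]] ? Hcc; simpl in Hcc; try discriminate;
  injection Hcc; intros <-.

Lemma fr_wk U n E Z : wk_chain n E Z -> Fr U Z -> Fr U E.
Proof.
  revert E; induction n as [|n IH]; intros E HE HZ; simpl in HE.
  - subst; auto.
  - destruct HE as [k [G [E1 [-> HE1]]]]. frmk. eauto.
Qed.

Lemma fr_abs U n E Z : abs_chain n E Z -> Fr U Z -> Fr U E.
Proof.
  revert E; induction n as [|n IH]; intros E HE HZ; simpl in HE.
  - subst; auto.
  - destruct HE as [k [G [E1 [-> HE1]]]]. frmk. eauto.
Qed.

Lemma fr_cut U E A X Y : is_cut E A X Y -> Fr U X -> Fr U Y -> Fr U E.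
Proof. intros [m [G [->| ->]]] HX HY; frmk; auto. Qed.

Lemma is_cut_sub2 U A X Y : is_cut U A X Y -> (exists a, X = sub U a) /\ (exists a, Y = sub U a).
Proof. intros H; destruct (is_cut_sub _ _ _ _ H) as [[-> ->]|[-> ->]]; split; eauto. Qed.

Lemma child_sub U a X n cs i c : X = sub U a -> X = mk n cs -> nth_error cs i = Some c ->
  c = sub U (a ++ [i]).
Proof. intros H1 H2 H3. rewrite (mk_sub _ _ _ _ _ H2 H3), H1, sub_sub; auto. Qed.

Lemma node_at U a X n cs : X = sub U a -> X = mk n cs -> U a = Some n.
Proof. intros H1 H2. rewrite H1 in H2. generalize (f_equal (fun t => t []) H2).
  simpl. unfold sub. rewrite app_nil_r. auto. Qed.

Ltac fid := eapply fr_id; match goal with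
 | Ha : ?X = sub ?U ?a, HX : ?X = mk _ _ |- _ =>
     first [eapply (child_sub _ _ _ _ _ 0 _ Ha HX); reflexivity
           |eapply (child_sub _ _ _ _ _ 1 _ Ha HX); reflexivity
           |eapply (child_sub _ _ _ _ _ _ _ Ha HX); eassumption]
 end.

Definition okU (U : tree) := forall q r G, U q = Some (r, G) -> exists ps, pats r G = Some ps.

Lemma root_fr U T : pclosed U -> okU U -> root_red U T -> Fr U T.
Proof.
  intros Hpc Hok Hr.
  destruct Hr as [Hr|[Hr|[Hr|[Hr|[Hr|[Hr|[Hr|Hr]]]]]]].
  - destruct Hr as (A & X & Y & A0 & G0 & Hc & HX & ->).
    destruct (is_cut_sub2 _ _ _ _ Hc) as [_ [b Hb]]. eapply fr_id; eauto.
  - destruct Hr as (A & B & X & Y & X1 & X2 & Y1 & k & mx & GX & k' & GY & E & Hc & HX & _ & HY & _ & H1 & H2).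
    destruct (is_cut_sub2 _ _ _ _ Hc) as [[a Ha] [b Hb]].
    eapply fr_cut; eauto.
    + fid.
    + eapply fr_cut; eauto; fid.
  - destruct Hr as (X & Y & k & GY & Y1 & Hc & HX & HY & ->).
    destruct (is_cut_sub2 _ _ _ _ Hc) as [[a Ha] [b Hb]].
    fid.
  - destruct Hr as (A & B & X & Y & X1 & Y1 & k & y & GX & k' & GY & X1' & Hc & HX & _ & HY & HGY & Hts & H2).
    destruct (is_cut_sub2 _ _ _ _ Hc) as [[a Ha] [b Hb]].
    assert (HB : lcb_at 0 B = true).
    { destruct (Hok b _ _ (node_at _ _ _ _ _ Hb HY)) as [ps Hps].
      simpl in Hps. rewrite HGY in Hps.
      destruct (expfree B && lcb_at 0 B) eqn:EB; try discriminate.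
      apply andb_true_iff in EB; tauto. }
    assert (HX1 : X1 = sub U (a ++ [0])) by (eapply child_sub; eauto; reflexivity).
    eapply fr_cut; eauto.
    + apply (fr_leaf U _ (a ++ [0]) y B HB). rewrite <- HX1.
      apply tsubst_F; auto. rewrite HX1. apply pclosed_sub; auto.
    + fid.
  - destruct Hr as (A & X & Y & XL & XR & YL & YR & k & GX & k' & GY & k'' & G' & E1 & E2 & Hc & HX & _ & HY & -> & H1 & H2).
    destruct (is_cut_sub2 _ _ _ _ Hc) as [[a Ha] [b Hb]].
    frmk; (eapply fr_cut; eauto; fid).
  - destruct Hr as (A & X & Y & XL & XR & k & GX & k' & GY & Y1 & Hc & HX & _ & HY & _ & Hw).
    destruct (is_cut_sub2 _ _ _ _ Hc) as [[a Ha] [b Hb]].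
    eapply fr_wk; eauto. fid.
  - destruct Hr as (A & X & Y & XL & XR & k & GX & k' & GY & Y1 & E & Hc & HX & _ & HY & _ & Hw & Ho).
    destruct (is_cut_sub2 _ _ _ _ Hc) as [[a Ha] [b Hb]].
    eapply fr_abs; eauto.
    destruct Ho as [[E0 [H1 H2]]|[E0 [H1 H2]]];
      (eapply fr_cut; eauto; [fid|];
       eapply fr_cut; eauto; fid).
  - destruct Hr as (A & X & Y & r & GX & Xs & r' & G' & Es & i & Xi & Xi' & Ei & s & Hc & HX & _ & Hck & -> & Hlen & HXi & HEi & Hoth & Hts & HE).
    destruct (is_cut_sub2 _ _ _ _ Hc) as [[a Ha] [b Hb]].
    assert (HXi' : Xi = sub U (a ++ [i])) by (eapply child_sub; eauto).
    assert (HF : Xi' = F (sub U (a ++ [i])) s).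
    { rewrite <- HXi'. apply tsubst_F; auto. rewrite HXi'; apply pclosed_sub; auto. }
    apply fr_mk. intros j c Hj.
    destruct (Nat.eq_dec j i) as [->|Hne].
    + rewrite HEi in Hj; inversion Hj; subst c. eapply fr_cut; eauto; [|eapply fr_id; eauto].
      destruct r; simpl in Hck; try contradiction.
      all: try (destruct Hck as [_ ->]; eapply fr_F0; eauto).
      destruct Hck as [k0 [y0 [_ ->]]]. eapply (fr_leaf U _ _ _ (FVar y0)); eauto.
    + rewrite Hoth in Hj; auto. fid.
Qed.

Definition Setup (D D' : tree) (p : list nat) (H : list (list nat)) (L : list leaf) : Prop :=
  coderiv D /\ coderiv D' /\ (forall q, (forall r, q <> p ++ r) -> D' q = D q) /\
  (forall r, D' (p ++ r) <> None -> In r H \/ exists l r', In l L /\ r = lpos l ++ r') /\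
  (forall l, In l L -> lcb_at 0 (lC l) = true /\
      sub D' (p ++ lpos l) = F (sub D (p ++ lq l)) (sl l)).

Lemma coderiv_pclosed D : coderiv D -> pclosed D.
Proof. intros [_ [H _]]; exact H. Qed.

Lemma setup_of_step D D' : cut_step D D' -> exists p H L, Setup D D' p H L.
Proof.
  intros [HD [HD' [p [_ [Hout [_ Hr]]]]]].
  assert (Hfr : Fr (sub D p) (sub D' p)).
  { apply root_fr; auto.
    - apply pclosed_sub, coderiv_pclosed; auto.
    - intros q r G E. destruct HD as [_ [_ H3]]. destruct (H3 _ _ _ E) as [_ [_ [_ Hps]]].
      destruct Hps as [ps [Hps _]]; eauto. }
  destruct Hfr as [H [L [A B]]]. exists p, H, L.
  unfold Setup; split; [auto|split; [auto|split; [auto|split]]].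
  - exact A.
  - intros l Hl. destruct (B l Hl) as [B1 B2]. split; auto. rewrite <- !sub_sub; auto.
Qed.

Lemma leaf_val D D' p H L l r : Setup D D' p H L -> In l L ->
  D' (p ++ lpos l ++ r) = F (sub D (p ++ lq l)) (sl l) r.
Proof.
  intros (_ & _ & _ & _ & B) Hl. destruct (B l Hl) as [_ E].
  rewrite <- E. unfold sub. rewrite app_assoc; auto.
Qed.

Lemma leaf_sub D D' p H L l r : Setup D D' p H L -> In l L ->
  sub D' (p ++ lpos l ++ r) = F (sub D (p ++ lq l ++ r)) (rhoF (sub D (p ++ lq l)) (sl l) r).
Proof.
  intros (_ & _ & _ & _ & B) Hl. destruct (B l Hl) as [_ E].
  rewrite app_assoc, <- sub_sub, E, F_sub, sub_sub, app_assoc; auto.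
Qed.

Lemma leaf_good l T r : good (ly l) (lC l) (rhoF T (sl l) r).
Proof. apply rhoF_good. right; reflexivity. Qed.

Lemma classify (p q : list nat) :
  (exists r, q = p ++ r) \/ (exists t, p = q ++ t) \/ (forall t u, q ++ t <> p ++ u).
Proof.
  destruct (classic (exists r, q = p ++ r)) as [|N1]; auto.
  destruct (classic (exists t, p = q ++ t)) as [|N2]; auto.
  right; right. intros t u E. apply app_eq_app in E as [l [[E1 _]|[E1 _]]]; eauto.
Qed.

Lemma out_eq D D' p H L q : Setup D D' p H L -> (forall t u, q ++ t <> p ++ u) ->
  sub D' q = sub D q.
Proof.
  intros (_ & _ & Hout & _) Hq. apply functional_extensionality; intro x; unfold sub.
  apply Hout. intros r E. apply (Hq x r); auto.
Qed.

Lemma out_eq0 D D' p H L q : Setup D D' p H L -> (forall t u, q ++ t <> p ++ u) ->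
  D' q = D q.
Proof.
  intros HS Hq. generalize (f_equal (fun T => T []) (out_eq _ _ _ _ _ _ HS Hq)).
  unfold sub; rewrite app_nil_r; auto.
Qed.

Lemma F_kind T s q rr G : F T s q = Some (rr, G) ->
  exists r0 G0, T q = Some (r0, G0) /\ rr = inst (rhoF T s q) r0 /\ G = map (fsubst (rhoF T s q)) G0.
Proof. unfold F. destruct (T q) as [[r0 G0]|]; intro E; inversion E; eauto. Qed.

Lemma inst_Cp s r k : inst s r = RCp k -> r = RCp k.
Proof. destruct r; simpl; congruence. Qed.

Definition prefL (p : list nat) := map (fun n => firstn n p) (seq 0 (S (length p))).

Lemma in_prefL p t q : p = q ++ t -> In q (prefL p).
Proof.
  intros ->. unfold prefL. apply in_map_iff. exists (length q). split.
  - rewrite firstn_app, Nat.sub_diag, firstn_all; simpl; rewrite app_nil_r; auto.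
  - apply in_seq. rewrite length_app; lia.
Qed.

Definition leafL (S : list tree) (L : list leaf) :=
  flat_map (fun l => flat_map (fun T => [F T FVar; F T (sl l)]) S) L.

Lemma in_leafL S L l T s : In l L -> In T S -> good (ly l) (lC l) s -> In (F T s) (leafL S L).
Proof.
  intros Hl HT Hs. unfold leafL. apply in_flat_map. exists l; split; auto.
  apply in_flat_map. exists T; split; auto. destruct Hs as [->| ->]; simpl; auto.
Qed.

Lemma reg_step D D' p H L : Setup D D' p H L -> regular D -> regular D'.
Proof.
  intros HS [S HSreg].
  exists (S ++ map (sub D') (prefL p) ++ map (fun r => sub D' (p ++ r)) H ++ leafL S L).
  intros q Hq. destruct (classify p q) as [[r ->]|[[t Ht]|Hinc]].
  - pose proof HS as (HD & HD' & Hout & HF & HL).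
    destruct (HF r Hq) as [Hin|[l [r' [Hl ->]]]].
    + apply in_or_app; right; apply in_or_app; right; apply in_or_app; left.
      apply in_map_iff; eauto.
    + rewrite (leaf_sub D D' p H L l r') by auto.
      rewrite (leaf_val D D' p H L l r') in Hq by auto.
      rewrite F_none in Hq. unfold sub in Hq. rewrite <- app_assoc in Hq.
      apply in_or_app; right; apply in_or_app; right; apply in_or_app; right.
      apply (in_leafL S L l); auto using leaf_good.
  - apply in_or_app; right; apply in_or_app; left. apply in_map; eapply in_prefL; eauto.
  - rewrite (out_eq _ _ _ _ _ _ HS Hinc). apply in_or_app; left. apply HSreg.
    rewrite <- (out_eq0 _ _ _ _ _ _ HS Hinc); auto.
Qed.

Lemma wreg_step D D' p H L : Setup D D' p H L -> weakly_regular D -> weakly_regular D'.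
Proof.
  intros HS [S HSw].
  exists (S ++ map (sub D') (prefL p) ++ map (fun r => sub D' (p ++ r ++ [0])) H ++ leafL S L).
  intros q k G Hq. pose proof HS as (HD & HD' & Hout & HF & HL).
  destruct (classic (exists r, q = p ++ r)) as [[r ->]|Nq].
  - destruct (HF r) as [Hin|[l [r' [Hl ->]]]]; [congruence| |].
    + apply in_or_app; right; apply in_or_app; right; apply in_or_app; left.
      apply in_map_iff; eauto. exists r; split; auto. rewrite app_assoc; auto.
    + rewrite (leaf_val D D' p H L l r') in Hq by auto.
      apply F_kind in Hq as (r0 & G0 & E1 & E2 & _). symmetry in E2; apply inst_Cp in E2; subst r0.
      unfold sub in E1. rewrite <- app_assoc in E1.
      specialize (HSw _ _ _ E1).
      rewrite <- !app_assoc. rewrite (leaf_sub D D' p H L l (r' ++ [0])) by auto.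
      apply in_or_app; right; apply in_or_app; right; apply in_or_app; right.
      apply (in_leafL S L l); auto using leaf_good. rewrite <- !app_assoc in *; auto.
  - assert (EqD : D' q = D q) by (apply Hout; intros r E; apply Nq; eauto).
    rewrite EqD in Hq.
    destruct (classify p (q ++ [0])) as [[r Hr]|[[t Ht]|Hinc]].
    + destruct r as [|x r0] using rev_ind.
      * rewrite app_nil_r in Hr. apply in_or_app; right; apply in_or_app; left.
        apply in_map. apply (in_prefL p []). rewrite app_nil_r; auto.
      * rewrite app_assoc in Hr. apply app_inj_tail in Hr as [Hr _]. exfalso; eauto.
    + apply in_or_app; right; apply in_or_app; left. apply in_map; eapply in_prefL; eauto.
    + rewrite (out_eq _ _ _ _ _ _ HS Hinc). apply in_or_app; left. eapply HSw; eauto.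
Qed.

Lemma pref_len b n : length (pref b n) = n.
Proof. unfold pref; rewrite length_map, length_seq; auto. Qed.

Lemma pref_add b n k : pref b (n + k) = pref b n ++ map b (seq n k).
Proof. unfold pref. rewrite seq_app, map_app; auto. Qed.

Lemma pref_S b n : pref b (S n) = pref b n ++ [b n].
Proof. rewrite <- Nat.add_1_r, pref_add; auto. Qed.

Lemma app_eq_len {T} (a b c d : list T) : length a = length c -> a ++ b = c ++ d -> a = c.
Proof.
  intros Hl E. assert (firstn (length a) (a ++ b) = firstn (length c) (c ++ d)) by (rewrite Hl, E; auto).
  rewrite !firstn_app, !Nat.sub_diag, !firstn_all in H; simpl in H. rewrite !app_nil_r in H; auto.
Qed.

Lemma branch_split b p : pref b (length p) = p \/ (forall n r, pref b n <> p ++ r).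
Proof.
  destruct (list_eq_dec Nat.eq_dec (pref b (length p)) p) as [|N]; auto.
  right. intros n r E. assert (Hn : length p <= n).
  { rewrite <- (pref_len b n), E, length_app; lia. }
  replace n with (length p + (n - length p)) in E by lia.
  rewrite pref_add in E. apply N. eapply app_eq_len; eauto. apply pref_len.
Qed.

Fixpoint prefb (a q : list nat) : bool :=
  match a, q with
  | [], _ => true
  | x :: a', y :: q' => Nat.eqb x y && prefb a' q'
  | _ :: _, [] => false
  end.

Lemma prefb_iff a q : prefb a q = true <-> exists t, q = a ++ t.
Proof.
  revert q; induction a as [|x a IH]; intros q.
  - simpl; split; eauto.
  - destruct q as [|y q]; simpl.
    + split; [discriminate|]. intros [t Ht]; discriminate.
    + rewrite andb_true_iff, IH, Nat.eqb_eq. split.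
      * intros [-> [t ->]]; eauto.
      * intros [t Ht]; inversion Ht; subst; eauto.
Qed.

Lemma prefb_app a q e : length a <= length q -> prefb a (q ++ e) = prefb a q.
Proof.
  revert q; induction a as [|x a IH]; intros [|y q] Hl; simpl in *; auto; try lia.
  rewrite IH; auto; lia.
Qed.

Definition maxlen (l : list (list nat)) := fold_right (fun x acc => Nat.max (length x) acc) 0 l.

Lemma maxlen_in x l : In x l -> length x <= maxlen l.
Proof. induction l as [|y l IH]; simpl; [intros []|]. intros [->|H]; [lia|]. specialize (IH H); lia. Qed.

Definition pick (L : list leaf) (p q : list nat) := find (fun l => prefb (p ++ lpos l) q) L.

Lemma pick_some L p q l : pick L p q = Some l -> In l L /\ exists t, q = p ++ lpos l ++ t.
Proof. unfold pick; intro E. apply find_some in E as [H1 H2]. apply prefb_iff in H2 as [t ->].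
  split; auto. exists t. rewrite app_assoc; auto. Qed.

Lemma pick_ext L p q e : (forall l, In l L -> length (p ++ lpos l) <= length q) ->
  pick L p (q ++ e) = pick L p q.
Proof.
  unfold pick. induction L as [|l L IH]; intros Hl; simpl; auto.
  rewrite prefb_app by (apply Hl; simpl; auto). rewrite IH; auto.
  intros; apply Hl; simpl; auto.
Qed.

Definition shb (a : list nat) (m : nat) (b : nat -> nat) : nat -> nat :=
  fun n => if n <? length a then nth n a 0 else b (n - length a + m).

Lemma map_seq_shift (g b : nat -> nat) s m t : (forall i, i < t -> g (s + i) = b (m + i)) ->
  map g (seq s t) = map b (seq m t).
Proof.
  revert s m; induction t as [|t IH]; intros s m H; simpl; auto.
  f_equal. - specialize (H 0); rewrite !Nat.add_0_r in H; apply H; lia.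
  - apply IH. intros i Hi. specialize (H (S i)). rewrite !Nat.add_succ_r in H. apply H; lia.
Qed.

Lemma pref_shb a m b t : pref (shb a m b) (length a + t) = a ++ map b (seq m t).
Proof.
  rewrite pref_add. f_equal.
  - unfold pref. apply nth_ext with (d := 0) (d' := 0).
    + rewrite length_map, length_seq; auto.
    + intros n Hn. rewrite length_map, length_seq in Hn.
      rewrite nth_indep with (d' := shb a m b 0) by (rewrite length_map, length_seq; auto).
      rewrite map_nth, seq_nth by auto. simpl. unfold shb.
      destruct (Nat.ltb_spec n (length a)); try lia; auto.
  - apply map_seq_shift. intros i Hi. unfold shb.
    destruct (Nat.ltb_spec (length a + i) (length a)); try lia. f_equal; lia.
Qed.

Lemma shb_val a m b t : shb a m b (length a + t) = b (m + t).
Proof. unfold shb. destruct (Nat.ltb_spec (length a + t) (length a)); try lia. f_equal; lia. Qed.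

Lemma concl_F T s q : concl_at (F T s) q = map (fsubst (rhoF T s q)) (concl_at T q).
Proof. unfold concl_at, F. destruct (T q) as [[r G]|]; auto. Qed.

Lemma is_oc_fsubst s A : is_oc A -> is_oc (fsubst s A).
Proof. destruct A; simpl; auto; intros []. Qed.

Lemma enter_leaf D D' p H L b : Setup D D' p H L -> infbranch D' b -> pref b (length p) = p ->
  exists m l r', In l L /\ pref b m = p ++ lpos l ++ r' /\
    (forall t, pick L p (pref b (m + t)) = Some l).
Proof.
  intros HS Hb Hp. pose proof HS as (HD & HD' & Hout & HF & HL).
  set (K := S (maxlen H + maxlen (map lpos L))).
  assert (Em : pref b (length p + K) = p ++ map b (seq (length p) K)) by (rewrite pref_add, Hp; auto).
  assert (Hne : D' (p ++ map b (seq (length p) K)) <> None) by (rewrite <- Em; apply Hb).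
  destruct (HF _ Hne) as [Hin|[l0 [r0 [Hl0 E0]]]].
  - apply maxlen_in in Hin. rewrite length_map, length_seq in Hin. unfold K in Hin; lia.
  - destruct (pick L p (pref b (length p + K))) as [l|] eqn:Epk.
    + destruct (pick_some _ _ _ _ Epk) as [Hl [t Ht]].
      exists (length p + K), l, t. split; auto. split; auto.
      intros t'. rewrite pref_add, pick_ext; auto.
      intros l' Hl'. rewrite pref_len, length_app.
      assert (length (lpos l') <= maxlen (map lpos L)) by (apply maxlen_in, in_map; auto).
      unfold K; lia.
    + exfalso. unfold pick in Epk. apply (find_none _ _ Epk) in Hl0.
      assert (prefb (p ++ lpos l0) (pref b (length p + K)) = true); [|congruence].
      apply prefb_iff. rewrite Em, E0. exists r0. rewrite app_assoc; auto.
Qed.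

Lemma F2_nth {A B} (R : A -> B -> Prop) l1 l2 i x : Forall2 R l1 l2 -> nth_error l1 i = Some x ->
  exists y, nth_error l2 i = Some y /\ R x y.
Proof.
  intros HF; revert i; induction HF as [|a b l1 l2 Hab HF IH]; intros [|i] E; simpl in *; try discriminate.
  - inversion E; subst; eauto.
  - eauto.
Qed.

Definition Qc (D' : tree) (q : list nat) (i : nat) (w : nat -> nat) : Prop :=
  forall r G ps, D' q = Some (r, G) -> pats r G = Some ps -> i < arity r ->
    exists pat, nth_error ps i = Some pat /\ perm_witness (concl_at D' (q ++ [i])) pat w.

Lemma Qc_ex D' q i : coderiv D' -> exists w, Qc D' q i w.
Proof.
  intros (_ & _ & H3). destruct (D' q) as [[r G]|] eqn:E.
  - destruct (H3 _ _ _ E) as (_ & _ & _ & ps0 & Hps0 & HF2).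
    destruct (lt_dec i (arity r)) as [Hi|Hi].
    + assert (Hn : nth_error (map (fun i => concl_at D' (q ++ [i])) (seq 0 (arity r))) i
                   = Some (concl_at D' (q ++ [i]))).
      { rewrite nth_error_map, nth_error_seq. destruct (Nat.ltb_spec i (arity r)); try lia. auto. }
      destruct (F2_nth _ _ _ _ _ HF2 Hn) as [pat [Hpat Hperm]].
      destruct (perm_witness_ex _ _ Hperm) as [w Hw]. exists w.
      intros r' G' ps E' Hps _. rewrite E in E'; inversion E'; subst.
      rewrite Hps0 in Hps; inversion Hps; subst. eauto.
    + exists (fun x => x). intros r' G' ps E' _ Hi'. rewrite E in E'; inversion E'; subst. lia.
  - exists (fun x => x). intros r' G' ps E'; rewrite E in E'; discriminate.
Qed.

Definition Wn (L : list leaf) (p : list nat) (W ch : list nat -> nat -> nat -> nat)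
  : list nat -> nat -> nat -> nat :=
  fun q i => match pick L p q with
  | Some l => W (p ++ lq l ++ skipn (length (p ++ lpos l)) q) i
  | None => if prefb p (q ++ [i]) then ch q i else W q i
  end.

Lemma skipn_len_app {T} (a b : list T) : skipn (length a) (a ++ b) = b.
Proof. induction a; simpl; auto. Qed.

Lemma concl_leaf D D' p H L l r : Setup D D' p H L -> In l L ->
  concl_at D' (p ++ lpos l ++ r) = concl_at (F (sub D (p ++ lq l)) (sl l)) r.
Proof. intros HS Hl. unfold concl_at. rewrite (leaf_val _ _ _ _ _ _ _ HS Hl); auto. Qed.

Lemma rule_ok_ex D q r G : coderiv D -> D q = Some (r, G) -> exists ps, pats r G = Some ps.
Proof. intros (_ & _ & H3) E. destruct (H3 _ _ _ E) as (_ & _ & _ & ps & Hps & _); eauto. Qed.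

Lemma local_ok_Wn D D' p H L W ch : Setup D D' p H L ->
  (forall q, local_ok D q (W q)) -> (forall q i, Qc D' q i (ch q i)) ->
  forall q, local_ok D' q (Wn L p W ch q).
Proof.
  intros HS HW Hch q. pose proof HS as (HD & HD' & Hout & HF & HL).
  unfold local_ok. destruct (D' q) as [[r G]|] eqn:Eq; auto. intros i ps Hps Hi. unfold Wn.
  destruct (pick L p q) as [l|] eqn:Ep.
  - destruct (pick_some _ _ _ _ Ep) as [Hl [t ->]].
    rewrite app_assoc, skipn_len_app. rewrite <- app_assoc.
    rewrite (leaf_val _ _ _ _ _ _ _ HS Hl) in Eq.
    apply F_kind in Eq as (r0 & G0 & E1 & -> & ->).
    set (rho := rhoF (sub D (p ++ lq l)) (sl l) t) in *.
    assert (E1' : D (p ++ lq l ++ t) = Some (r0, G0)) by (unfold sub in E1; rewrite app_assoc; auto).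
    destruct (rule_ok_ex _ _ _ _ HD E1') as [ps0 Hps0].
    assert (Hslc : slc rho).
    { apply (good_slc (ly l) (lC l)); [apply (HL l Hl)|apply leaf_good]. }
    pose proof (pats_subst _ _ _ _ _ Hslc Hps0 Hps) as Eps.
    rewrite arity_inst in Hi.
    specialize (HW (p ++ lq l ++ t)). unfold local_ok in HW. rewrite E1' in HW.
    destruct (HW i ps0 Hps0 Hi) as [pat [Hpat Hpw]].
    exists (map (fsubst (stp rho (Some (r0, G0)))) pat). split.
    + rewrite Eps. apply map_nth_error; auto.
    + rewrite <- !app_assoc. rewrite (concl_leaf _ _ _ _ _ _ _ HS Hl), concl_F, rhoF_snoc.
      fold rho. rewrite E1. apply perm_witness_map.
      replace (concl_at (sub D (p ++ lq l)) (t ++ [i])) with (concl_at D ((p ++ lq l ++ t) ++ [i])); auto.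
      unfold concl_at, sub; rewrite <- !app_assoc; auto.
  - destruct (prefb p (q ++ [i])) eqn:Epb.
    + apply (Hch q i r G ps Eq Hps Hi).
    + assert (N1 : forall r', q ++ [i] <> p ++ r').
      { intros r' E. assert (prefb p (q ++ [i]) = true) by (apply prefb_iff; eauto). congruence. }
      assert (N2 : forall r', q <> p ++ r').
      { intros r' E. apply (N1 (r' ++ [i])). rewrite E, app_assoc; auto. }
      rewrite Hout in Eq by auto.
      specialize (HW q). unfold local_ok in HW. rewrite Eq in HW.
      destruct (HW i ps Hps Hi) as [pat [Hpat Hpw]]. exists pat; split; auto.
      unfold concl_at. rewrite Hout by auto. exact Hpw.
Qed.

Lemma leaf_pos D D' p H L b m l r' t : Setup D D' p H L -> In l L ->
  pref b m = p ++ lpos l ++ r' ->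
  D' (pref b (m + t)) = F (sub D (p ++ lq l)) (sl l) (r' ++ map b (seq m t)) /\
  pref (shb (p ++ lq l ++ r') m b) (length (p ++ lq l ++ r') + t)
    = (p ++ lq l) ++ (r' ++ map b (seq m t)) /\
  pref b (m + t) = p ++ lpos l ++ (r' ++ map b (seq m t)).
Proof.
  intros HS Hl Hm.
  assert (E : pref b (m + t) = p ++ lpos l ++ (r' ++ map b (seq m t)))
    by (rewrite pref_add, Hm, !app_assoc; auto).
  split; [|split]; auto.
  - rewrite E. apply (leaf_val _ _ _ _ _ _ _ HS Hl).
  - rewrite pref_shb, !app_assoc; auto.
Qed.

Lemma leaf_branch D D' p H L b : Setup D D' p H L -> infbranch D' b -> pref b (length p) = p ->
  exists m l r', In l L /\ pref b m = p ++ lpos l ++ r' /\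
    (forall t, pick L p (pref b (m + t)) = Some l) /\
    infbranch D (shb (p ++ lq l ++ r') m b).
Proof.
  intros HS Hb Hp. destruct (enter_leaf _ _ _ _ _ _ HS Hb Hp) as (m & l & r' & Hl & Hm & Hpk).
  exists m, l, r'. split; auto. split; auto. split; auto.
  set (a := p ++ lq l ++ r').
  assert (Ht : forall t, D (pref (shb a m b) (length a + t)) <> None).
  { intros t. destruct (leaf_pos _ _ _ _ _ b m l r' t HS Hl Hm) as [E1 [E2 _]].
    unfold a; rewrite E2. specialize (Hb (m + t)). rewrite E1, F_none in Hb. exact Hb. }
  intros n. destruct (le_lt_dec (length a) n) as [Hn|Hn].
  - replace n with (length a + (n - length a)) by lia. apply Ht.
  - pose proof (Ht 0) as H0. rewrite Nat.add_0_r in H0.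
    replace (length a) with (n + (length a - n)) in H0 by lia.
    rewrite pref_add in H0. eapply pclosed_pre; [apply coderiv_pclosed; apply HS|exact H0].
Qed.

Lemma fe_step D D' p H L : Setup D D' p H L -> finitely_expandable D -> finitely_expandable D'.
Proof.
  intros HS HFE b Hb. pose proof HS as (HD & HD' & Hout & HF & HL).
  destruct (branch_split b p) as [Hp|Hn].
  - destruct (leaf_branch _ _ _ _ _ _ HS Hb Hp) as (m & l & r' & Hl & Hm & Hpk & Hb0).
    destruct (HFE _ Hb0) as [N HN]. exists (m + N). intros n Hnn.
    replace n with (m + (n - m)) by lia.
    destruct (leaf_pos _ _ _ _ _ b m l r' (n - m) HS Hl Hm) as [E1 [E2 _]].
    rewrite E1. specialize (HN (length (p ++ lq l ++ r') + (n - m))). rewrite E2 in HN.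
    unfold F, sub. rewrite <- app_assoc in HN |- *.
    destruct (D (p ++ lq l ++ r' ++ map b (seq m (n - m)))) as [[r G]|]; auto.
    assert (HNN := HN ltac:(lia)). destruct r; simpl in *; auto.
  - assert (Hb' : infbranch D b).
    { intros n. rewrite <- Hout by (intros r E; eapply Hn; eauto). apply Hb. }
    destruct (HFE _ Hb') as [N HN]. exists N. intros n Hnn.
    rewrite Hout by (intros r E; eapply Hn; eauto). apply HN; auto.
Qed.

Lemma prog_step D D' p H L : Setup D D' p H L -> progressing D -> progressing D'.
Proof.
  intros HS [W [HW Hth]]. pose proof HS as (HD & HD' & Hout & HF & HL).
  assert (Hch : forall q i, {w | Qc D' q i w})
    by (intros; apply constructive_indefinite_description, Qc_ex; auto).
  set (ch := fun q i => proj1_sig (Hch q i)).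
  exists (Wn L p W ch). split.
  { apply (local_ok_Wn D D' p H L); auto. intros q i; exact (proj2_sig (Hch q i)). }
  intros b Hb. destruct (branch_split b p) as [Hp|Hn].
  - destruct (leaf_branch _ _ _ _ _ _ HS Hb Hp) as (m & l & r' & Hl & Hm & Hpk & Hb0).
    set (a := p ++ lq l ++ r') in *.
    destruct (Hth _ Hb0) as [n0 [f [Hf Hcp]]].
    set (T := sub D (p ++ lq l)).
    assert (Key : forall t, exists rho,
      D' (pref b (m + t)) = match D (pref (shb a m b) (length a + t)) with
                            | Some (r, G) => Some (inst rho r, map (fsubst rho) G)
                            | None => None end /\
      concl_at D' (pref b (m + t)) = map (fsubst rho) (concl_at D (pref (shb a m b) (length a + t))) /\
      Wn L p W ch (pref b (m + t)) = W (pref (shb a m b) (length a + t))).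
    { intros t. destruct (leaf_pos _ _ _ _ _ b m l r' t HS Hl Hm) as [E1 [E2 E3]].
      exists (rhoF T (sl l) (r' ++ map b (seq m t))).
      assert (ET : T (r' ++ map b (seq m t)) = D (pref (shb a m b) (length a + t)))
        by (unfold a; rewrite E2; reflexivity).
      split; [|split].
      - rewrite E1. unfold F. fold T. rewrite ET. reflexivity.
      - unfold concl_at at 1. rewrite E1. fold T.
        change (match F T (sl l) (r' ++ map b (seq m t)) with Some (_, G) => G | None => [] end)
          with (concl_at (F T (sl l)) (r' ++ map b (seq m t))).
        rewrite concl_F. unfold concl_at. rewrite ET. reflexivity.
      - apply functional_extensionality; intro i. unfold Wn. rewrite Hpk.
        rewrite E3, (app_assoc p (lpos l)), skipn_len_app. unfold a; rewrite E2, <- app_assoc. reflexivity. }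
    exists (m + n0), (fun n => f (n - m + length a)). split.
    + intros n Hnn. replace n with (m + (n - m)) by lia. set (t := n - m).
      replace (m + t - m + length a) with (length a + t) by lia.
      replace (S (m + t) - m + length a) with (S (length a + t)) by lia.
      destruct (Hf (length a + t) ltac:(lia)) as (Hf1 & Hf2 & Hf3).
      destruct (Key t) as (rho & K1 & K2 & K3).
      rewrite K2, length_map, nth_map_One. split; auto. split; [apply is_oc_fsubst; auto|].
      unfold anc in *. rewrite K1, K3.
      destruct (D (pref (shb a m b) (length a + t))) as [[r G]|]; [|discriminate].
      rewrite pa_inst. rewrite <- (shb_val a m b t). exact Hf3.
    + intros N. destruct (Hcp (N + length a + n0)) as [n'' [Hn'' [G HG]]].
      exists (m + (n'' - length a)). split; [lia|].
      destruct (Key (n'' - length a)) as (rho & K1 & _ & _).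
      replace (length a + (n'' - length a)) with n'' in K1 by lia.
      rewrite K1, HG. simpl. replace (m + (n'' - length a) - m + length a) with n'' by lia. eexists; reflexivity.
  - assert (Hnp : forall n r, pref b n <> p ++ r) by exact Hn.
    assert (Hb' : infbranch D b).
    { intros n. rewrite <- Hout by (intros r E; eapply Hn; eauto). apply Hb. }
    destruct (Hth _ Hb') as [n0 [f [Hf Hcp]]]. exists n0, f.
    assert (EW : forall n, Wn L p W ch (pref b n) (b n) = W (pref b n) (b n)).
    { intros n. unfold Wn. destruct (pick L p (pref b n)) as [l|] eqn:Ep.
      - destruct (pick_some _ _ _ _ Ep) as [_ [t Et]]. exfalso; eapply Hn; eauto.
      - destruct (prefb p (pref b n ++ [b n])) eqn:Epb; auto.
        apply prefb_iff in Epb as [t Et]. rewrite <- pref_S in Et. exfalso; eapply Hn; eauto. }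
    assert (ED : forall n, D' (pref b n) = D (pref b n))
      by (intros n; apply Hout; intros r E; eapply Hn; eauto).
    split.
    + intros n Hnn. destruct (Hf n Hnn) as (Hf1 & Hf2 & Hf3).
      unfold concl_at, anc in *. rewrite ED, EW. auto.
    + intros N. destruct (Hcp N) as [n [Hn1 [G HG]]]. exists n; split; auto. exists G.
      rewrite ED; auto.
Qed.

Theorem mainTheorem4 :
  (forall D D' : tree, cut_step D D' ->
     (weakly_regular D -> weakly_regular D') /\
     (regular D -> regular D') /\
     (finitely_expandable D -> finitely_expandable D')) /\
  (forall D D' : tree, cut_step D D' ->
     (rPLL D -> rPLL D') /\ (wrPLL D -> wrPLL D')).
Proof.
  split.
  - intros D D' Hs. destruct (setup_of_step _ _ Hs) as (p & H & L & HS).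
    split; [|split]; intro; eauto using wreg_step, reg_step, fe_step.
  - intros D D' Hs. destruct (setup_of_step _ _ Hs) as (p & H & L & HS).
    pose proof HS as (_ & HD' & _).
    split; intros (H1 & H2 & H3 & H4); (split; [exact HD'|split; [|split]]);
      eauto using wreg_step, reg_step, fe_step, prog_step.
Qed.
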